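(* Let $\mathcal H$ be an HDML model, $\varphi$ a formula, and $Q_n^f$ the filtration classes defined below. For $n\ge1$, $1\le i\le n$ and $[q]\in Q_n^f$, define $s_i^f([q])=[r]$ iff $s_i(p)\in[r]$ for all $p\in[q]$, and $t_i^f([q])=[r]$ iff $t_i(p)\in[r]$ for all $p\in[q]$. Then (1) $s_i^f$ and $t_i^f$ are well-defined total maps $Q_n^f\to Q_{n-1}^f$; and (2) they satisfy the cubical laws $\alpha^f_i\circ\beta^f_j=\beta^f_{j-1}\circ\alpha^f_i$ for $1\le i<j\le n$, $\alpha,\beta\in\{s,t\}$. Consequently $(\bigcup_n Q_n^f,\bar s^f,\bar t^f)$ is a cubical set.
   Context: A cubical set consists of pairwise disjoint sets $Q_n$ ($n\in\mathbb N$), $Q=\bigcup_n Q_n$, and for every $n\ge1$ and $1\le i\le n$ maps $s_i,t_i:Q_n\to Q_{n-1}$ satisfying the cubical laws $\alpha_i\circ\beta_j=\beta_{j-1}\circ\alpha_i$ for all $1\le i<j\le n$ and $\alpha,\beta\in\{s,t\}$. Elements of $Q_n$ are cells of dimension $n$. An HDML model is $\mathcal H=(Q,\bar s,\bar t,l,V)$ where $(Q,\bar s,\bar t)$ is a cubical set, $l:Q_1\to\Sigma$ is a labeling with $l(s_i(q))=l(t_i(q))$ for $q\in Q_2$, $i\in\{1,2\}$, and $V:Q\to 2^{AP}$ a valuation. HDML formulas: $\varphi::=p\mid\bot\mid\varphi\to\varphi\mid\langle\mathsf s\rangle\varphi\mid\langle\mathsf t\rangle\varphi$ ($p\in AP$).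 Satisfaction at $q\in Q_n$: $\mathcal H,q\models p$ iff $p\in V(q)$; $\bot$ never holds; $\to$ classical; $\mathcal H,q\models\langle\mathsf s\rangle\psi$ iff there are $q'\in Q_{n+1}$ and $1\le i\le n+1$ with $s_i(q')=q$ and $\mathcal H,q'\models\psi$; $\mathcal H,q\models\langle\mathsf t\rangle\psi$ iff there is $1\le i\le n$ with $\mathcal H,t_i(q)\models\psi$. $\mathcal C(\varphi)$ is the set of subformulas of $\varphi$. For $q,q'$ of the same dimension, $q\equiv q'$ iff for every $\psi\in\mathcal C(\varphi)$, $\mathcal H,q\models\psi\iff\mathcal H,q'\models\psi$. For $q\in Q_0$, $[q]=\{q'\in Q_0:q\equiv q'\}$; for $q\in Q_n$, $n\ge1$, $[q]=\{q'\in Q_n: q\equiv q'$, $t_i(q')\in[t_i(q)]$ and $s_i(q')\in[s_i(q)]$ for all $1\le i\le n\}$; $Q_n^f=\{[q]:q\in Q_n\}$. *)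

(* Defs.v *)
From Stdlib Require Import Arith Lia.

Set Implicit Arguments.

(* Cubical laws for a dimension-indexed family Q with face maps
   s n i, t n i : Q (S n) -> Q n, meaningful for 1 <= i <= S n.
   face true = s, face false = t  (alpha, beta range over {s,t}). *)
Definition cubical_laws (Q : nat -> Type)
  (s t : forall n : nat, nat -> Q (S n) -> Q n) : Prop :=
  forall (a b : bool) (n i j : nat) (q : Q (S (S n))),
    1 <= i -> i < j -> j <= S (S n) ->
    (if a then s else t) n i ((if b then s else t) (S n) j q) =
    (if b then s else t) n (j - 1) ((if a then s else t) (S n) i q).

Record CubicalSet := {
  cQ : nat -> Type;
  cs : forall n : nat, nat -> cQ (S n) -> cQ n;
  ct : forall n : nat, nat -> cQ (S n) -> cQ n;
  claws : cubical_laws cQ cs ct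
}.

Record HDML (Sigma AP : Type) := {
  hcube :> CubicalSet;
  hl : cQ hcube 1 -> Sigma;
  hl_law : forall (q : cQ hcube 2) (i : nat), 1 <= i <= 2 ->
      hl (cs hcube 1 i q) = hl (ct hcube 1 i q);
  hV : forall n : nat, cQ hcube n -> AP -> Prop
}.

Inductive form (AP : Type) : Type :=
| FVar : AP -> form AP
| FBot : form AP
| FImp : form AP -> form AP -> form AP
| FDs : form AP -> form AP
| FDt : form AP -> form AP.

Arguments FBot {AP}.

Section Sem.
Variables (Sigma AP : Type) (H : HDML Sigma AP).

Fixpoint sat (phi : form AP) : forall n : nat, cQ H n -> Prop :=
  match phi with
  | FVar p => fun n q => hV H n q p
  | FBot => fun _ _ => False
  | FImp a b => fun n q => sat a n q -> sat b n q
  | FDs a => fun n q => exists (q' : cQ H (S n)) (i : nat),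
       1 <= i <= S n /\ cs H n i q' = q /\ sat a (S n) q'
  | FDt a => fun n => match n return cQ H n -> Prop with
       | 0 => fun _ => False
       | S m => fun q => exists i, 1 <= i <= S m /\ sat a m (ct H m i q)
       end
  end.

Fixpoint subformula (psi phi : form AP) : Prop :=
  psi = phi \/
  match phi with
  | FImp a b => subformula psi a \/ subformula psi b
  | FDs a => subformula psi a
  | FDt a => subformula psi a
  | _ => False
  end.

Definition fequiv (phi : form AP) (n : nat) (q q' : cQ H n) : Prop :=
  forall psi, subformula psi phi -> (sat psi n q <-> sat psi n q').

(* cls phi n q q'  :<->  q' \in [q] *)
Fixpoint cls (phi : form AP) (n : nat) : cQ H n -> cQ H n -> Prop :=
  match n return cQ H n -> cQ H n -> Prop with
  | 0 => fun q q' => fequiv phi 0 q q'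
  | S m => fun q q' => fequiv phi (S m) q q' /\
      forall i, 1 <= i <= S m ->
        cls phi m (ct H m i q) (ct H m i q') /\
        cls phi m (cs H m i q) (cs H m i q')
  end.

Definition isClass (phi : form AP) (n : nat) (C : cQ H n -> Prop) : Prop :=
  exists q, forall x, C x <-> cls phi n q x.

(* alpha^f_i(C) = D  (alpha = s if a = true, t otherwise):
   D \in Q_{n}^f and alpha_i(p) \in D for all p \in C. *)
Definition faceF (phi : form AP) (a : bool) (n i : nat)
  (C : cQ H (S n) -> Prop) (D : cQ H n -> Prop) : Prop :=
  isClass phi n D /\
  forall p, C p -> D ((if a then cs H else ct H) n i p).

Definition QF (phi : form AP) (n : nat) : Type :=
  { C : cQ H n -> Prop | isClass phi n C }.

End Sem.

(* Main.v *)
Require Import Defs.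
From Stdlib Require Import Arith Lia.
From Stdlib Require Import ClassicalEpsilon FunctionalExtensionality PropExtensionality ProofIrrelevance.

Lemma fequiv_refl Sigma AP (H : HDML Sigma AP) phi n q : fequiv H phi n q q.
Proof. intros psi _; tauto. Qed.

Lemma cls_refl Sigma AP (H : HDML Sigma AP) phi n : forall q, cls H phi n q q.
Proof.
  induction n; intro q; simpl.
  - apply fequiv_refl.
  - split; [apply fequiv_refl|]. intros; split; apply IHn.
Qed.

Lemma cls_sym Sigma AP (H : HDML Sigma AP) phi n : forall q p, cls H phi n q p -> cls H phi n p q.
Proof.
  induction n; intros q p Hc; simpl in *.
  - intros psi Hp; specialize (Hc psi Hp); tauto.
  - destruct Hc as [Hf Hc]. split.
    + intros psi Hp; specialize (Hf psi Hp); tauto.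
    + intros i Hi; destruct (Hc i Hi); split; apply IHn; auto.
Qed.

Lemma cls_trans Sigma AP (H : HDML Sigma AP) phi n : forall q p r,
  cls H phi n q p -> cls H phi n p r -> cls H phi n q r.
Proof.
  induction n; intros q p r H1 H2; simpl in *.
  - intros psi Hp; specialize (H1 psi Hp); specialize (H2 psi Hp); tauto.
  - destruct H1 as [Hf1 Hc1], H2 as [Hf2 Hc2]. split.
    + intros psi Hp; specialize (Hf1 psi Hp); specialize (Hf2 psi Hp); tauto.
    + intros i Hi; destruct (Hc1 i Hi), (Hc2 i Hi); split; eapply IHn; eauto.
Qed.

Lemma cls_face Sigma AP (H : HDML Sigma AP) phi (a : bool) n i q p :
  1 <= i <= S n -> cls H phi (S n) q p ->
  cls H phi n ((if a then cs H else ct H) n i q) ((if a then cs H else ct H) n i p).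
Proof.
  intros Hi [_ Hc]; destruct (Hc i Hi); destruct a; auto.
Qed.

Lemma class_eq {Sigma AP} {H : HDML Sigma AP} {phi n} {D D' : cQ H n -> Prop} {y} :
  isClass H phi n D -> isClass H phi n D' -> D y -> D' y -> forall x, D x <-> D' x.
Proof.
  intros [d Hd] [d' Hd'] Hy Hy' x. rewrite Hd, Hd'. apply Hd in Hy. apply Hd' in Hy'.
  split; intro Hx.
  - eapply cls_trans; [exact Hy'|]. eapply cls_trans; [apply cls_sym; exact Hy|exact Hx].
  - eapply cls_trans; [exact Hy|]. eapply cls_trans; [apply cls_sym; exact Hy'|exact Hx].
Qed.

Definition rep {Sigma AP} (H : HDML Sigma AP) phi n (C : QF H phi n) : cQ H n :=
  proj1_sig (constructive_indefinite_description _ (proj2_sig C)).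

Arguments rep {Sigma AP H phi n} C.
Lemma rep_spec {Sigma AP} (H : HDML Sigma AP) phi n (C : QF H phi n) :
  forall x, proj1_sig C x <-> cls H phi n (rep C) x.
Proof. unfold rep. destruct (constructive_indefinite_description _ _). exact i. Qed.

Definition faceQF {Sigma AP} {H : HDML Sigma AP} {phi} (a : bool) n i (C : QF H phi (S n)) : QF H phi n :=
  exist _ (cls H phi n ((if a then cs H else ct H) n i (rep C)))
    (ex_intro (fun q => forall x, cls H phi n ((if a then cs H else ct H) n i (rep C)) x <-> cls H phi n q x) ((if a then cs H else ct H) n i (rep C)) (fun x => iff_refl _)).

Arguments faceQF {Sigma AP H phi} a {n} i C.
Lemma faceQF_spec {Sigma AP} (H : HDML Sigma AP) phi (a : bool) n i (C : QF H phi (S n)) :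
  1 <= i <= S n -> faceF H phi a n i (proj1_sig C) (proj1_sig (faceQF a i C)).
Proof.
  intro Hi. split.
  - exact (proj2_sig (faceQF a i C)).
  - intros p Hp. simpl. apply cls_face; auto. apply rep_spec; auto.
Qed.

Theorem mainTheorem3 (Sigma AP : Type) (H : HDML Sigma AP) (phi : form AP) :
  (* (1) s^f_i, t^f_i are well-defined total maps Q_n^f -> Q_{n-1}^f *)
  (forall (a : bool) (n i : nat) (C : cQ H (S n) -> Prop),
     1 <= i <= S n -> isClass H phi (S n) C ->
     (exists D, faceF H phi a n i C D) /\
     (forall D D', faceF H phi a n i C D -> faceF H phi a n i C D' ->
        forall x, D x <-> D' x)) /\
  (* (2) cubical laws alpha^f_i o beta^f_j = beta^f_{j-1} o alpha^f_i *)
  (forall (a b : bool) (n i j : nat) (C : cQ H (S (S n)) -> Prop)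
          (D1 : cQ H (S n) -> Prop) (E1 : cQ H n -> Prop)
          (D2 : cQ H (S n) -> Prop) (E2 : cQ H n -> Prop),
     1 <= i -> i < j -> j <= S (S n) -> isClass H phi (S (S n)) C ->
     faceF H phi b (S n) j C D1 -> faceF H phi a n i D1 E1 ->
     faceF H phi a (S n) i C D2 -> faceF H phi b n (j - 1) D2 E2 ->
     forall x, E1 x <-> E2 x) /\
  (* consequently (U_n Q_n^f, s^f, t^f) is a cubical set *)
  (exists sF tF : forall n : nat, nat -> QF H phi (S n) -> QF H phi n,
     (forall n i (C : QF H phi (S n)), 1 <= i <= S n ->
        faceF H phi true n i (proj1_sig C) (proj1_sig (sF n i C)) /\
        faceF H phi false n i (proj1_sig C) (proj1_sig (tF n i C))) /\
     cubical_laws (QF H phi) sF tF).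
Proof.
  split; [|split].
  - intros a n i C Hi HC. split.
    + eexists; exact (faceQF_spec H phi a n i (exist _ C HC) Hi).
    + destruct HC as [q Hq]. intros D D' [HD HD1] [HD' HD1'].
      apply (class_eq HD HD' (y := (if a then cs H else ct H) n i q)).
      * apply HD1, Hq, cls_refl.
      * apply HD1', Hq, cls_refl.
  - intros a b n i j C D1 E1 D2 E2 Hi Hij Hj [q Hq] [HD1 F1] [HE1 G1] [HD2 F2] [HE2 G2].
    apply (class_eq HE1 HE2 (y := (if a then cs H else ct H) n i ((if b then cs H else ct H) (S n) j q))).
    + apply G1, F1, Hq, cls_refl.
    + pose proof (claws H a b q Hi Hij Hj) as L.
      destruct a, b; cbn beta iota in L |- *; rewrite L; apply G2, F2, Hq, cls_refl.
  - exists (fun n => @faceQF _ _ H phi true n), (fun n => @faceQF _ _ H phi false n). split.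
    + intros n i C Hi. split; apply faceQF_spec; auto.
    + intros a b n i j C Hi Hij Hj.
      assert (E : forall (a : bool) (n i : nat) (C : QF H phi (S n)), (if a then (fun n => @faceQF _ _ H phi true n) else (fun n => @faceQF _ _ H phi false n)) n i C = faceQF a i C)
        by (intros [|] ? ? ?; reflexivity).
      rewrite !E.
      apply eq_sig_hprop; [intros; apply proof_irrelevance|]. simpl.
      apply functional_extensionality; intro x; apply propositional_extensionality.
      apply (class_eq (proj2_sig (faceQF a i (faceQF b j C))) (proj2_sig (faceQF b (j-1) (faceQF a i C)))
               (y := (if a then cs H else ct H) n i ((if b then cs H else ct H) (S n) j (rep C)))).
      * simpl. apply cls_face; [lia|]. apply rep_spec. apply cls_refl.
      * simpl. pose proof (claws H a b (rep C) Hi Hij Hj) as L.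
        replace ((if a then cs H else ct H) n i ((if b then cs H else ct H) (S n) j (rep C)))
          with ((if b then cs H else ct H) n (j-1) ((if a then cs H else ct H) (S n) i (rep C)))
          by (destruct a, b; symmetry; exact L).
        apply cls_face; [lia|]. apply rep_spec. apply cls_refl.
Qed.
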